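(* The three-element chain $3=\{0<1<2\}$ forms a strong generator of $\mathbf{CPO}$: it is a generator, and for every cpo $B$ and every proper subobject $f\colon A\to B$ (a monomorphism that is not an isomorphism) there is a cpo map $3\to B$ that does not factor through $f$.
   Context: A cpo is a poset in which every chain, including the empty chain, has a join. A cpo map is a map preserving joins of all chains. $\mathbf{CPO}$ is the category of cpo's and cpo maps. A set $\mathcal G$ of objects is a generator if for any two distinct morphisms $f,g\colon A\to B$ there are $G\in\mathcal G$ and $h\colon G\to A$ with $fh\ne gh$. Monomorphisms in $\mathbf{CPO}$ are exactly the injective cpo maps, and isomorphisms are exactly the bijective cpo maps that reflect the order. *)

(* Defs.v *)
From Stdlib Require Import Classical Lia.

Set Implicit Arguments.
Unset Strict Implicit.

Record poset := Poset {
  carrier :> Type;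
  le : carrier -> carrier -> Prop;
  le_refl : forall x, le x x;
  le_trans : forall x y z, le x y -> le y z -> le x z;
  le_antisym : forall x y, le x y -> le y x -> x = y }.
Arguments le {p} _ _.

Definition is_chain (P : poset) (C : P -> Prop) : Prop :=
  forall x y, C x -> C y -> le x y \/ le y x.

Arguments is_chain {P} C.

Definition is_join (P : poset) (C : P -> Prop) (j : P) : Prop :=
  (forall x, C x -> le x j) /\ (forall u, (forall x, C x -> le x u) -> le j u).

Arguments is_join {P} C j.

(** A cpo: every chain, including the empty one, has a join. *)
Record cpo := Cpo {
  cpo_poset :> poset;
  cpo_chain_join : forall C : cpo_poset -> Prop, is_chain C -> exists j, is_join C j }.

Definition is_cpo_map (A B : cpo) (f : A -> B) : Prop :=
  forall (C : A -> Prop) (j : A), is_chain C -> is_join C j ->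
    is_join (fun y : B => exists x, C x /\ y = f x) (f j).

Record cpo_map (A B : cpo) := CpoMap {
  cmap :> A -> B;
  cmap_join : is_cpo_map cmap }.

Definition is_mono (A B : cpo) (f : cpo_map A B) : Prop :=
  forall (C : cpo) (g1 g2 : cpo_map C A),
    (fun x => f (g1 x)) = (fun x => f (g2 x)) -> (g1 : C -> A) = g2.

Definition is_iso (A B : cpo) (f : cpo_map A B) : Prop :=
  exists g : cpo_map B A, (forall x, g (f x) = x) /\ (forall y, f (g y) = y).

Definition is_generator (G : cpo) : Prop :=
  forall (A B : cpo) (f g : cpo_map A B), (f : A -> B) <> g ->
    exists h : cpo_map G A, (fun x => f (h x)) <> (fun x => g (h x)).

Inductive three := T0 | T1 | T2.
Definition rank (x : three) : nat := match x with T0 => 0 | T1 => 1 | T2 => 2 end.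
Definition three_le (x y : three) : Prop := rank x <= rank y.

Definition three_poset : poset.
Proof.
  refine (@Poset three three_le _ _ _); unfold three_le.
  - intros; lia.
  - intros; lia.
  - intros [] [] H1 H2; simpl in *; try reflexivity; lia.
Defined.

Lemma three_chain_join : forall C : three_poset -> Prop, is_chain C -> exists j, is_join C j.
Proof.
  intros C _.
  destruct (classic (C T2)) as [H2|H2]; [exists T2|].
  { split; [intros [] _; simpl; unfold three_le; simpl; lia|].
    intros u Hu; apply Hu; exact H2. }
  destruct (classic (C T1)) as [H1|H1]; [exists T1|exists T0].
  { split.
    - intros [] Hx; simpl; unfold three_le; simpl; try lia; contradiction.
    - intros u Hu; apply Hu; exact H1. }
  { split.
    - intros [] Hx; simpl; unfold three_le; simpl; try lia; contradiction.
    - intros u _; simpl; unfold three_le; simpl; lia. }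
Qed.

Definition three_cpo : cpo := @Cpo three_poset three_chain_join.

(* Main.v *)
Require Import Defs.
From Stdlib Require Import Classical ClassicalEpsilon FunctionalExtensionality Lia.

Lemma cpo_bot (A : cpo) : exists bot : A, forall x, le bot x.
Proof.
  destruct (@cpo_chain_join A (fun _ => False)) as [j [_ Hj]].
  - intros x y [].
  - exists j; intro x; apply Hj; intros ? [].
Qed.

Lemma cpo_mono {A B : cpo} {f : A -> B} : is_cpo_map f ->
  forall x y, le x y -> le (f x) (f y).
Proof.
  intros Hf x y Hxy.
  assert (Hc : is_chain (P:=A) (fun z => z = x \/ z = y)).
  { intros u v [->| ->] [->| ->]; auto using le_refl. }
  assert (Hj : is_join (P:=A) (fun z => z = x \/ z = y) y).
  { split.
    - intros z [->| ->]; auto using le_refl.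
    - intros u Hu; apply Hu; auto. }
  destruct (Hf _ _ Hc Hj) as [H1 _]. apply H1. exists x; auto.
Qed.

Definition h3 {A : cpo} (bot a b : A) (t : three_cpo) : A :=
  match t with T0 => bot | T1 => a | T2 => b end.

Lemma h3_map {A : cpo} (bot a b : A) : (forall x, le bot x) -> le a b ->
  @is_cpo_map three_cpo A (h3 bot a b).
Proof.
  intros Hbot Hab C j _ [Hup Hl].
  assert (Hm : forall x y : three_cpo, le x y -> le (h3 bot a b x) (h3 bot a b y)).
  { intros [] [] H; simpl in *; unfold three_le in H; simpl in H;
      try lia; auto using le_refl. }
  destruct (classic (C j)) as [Cj|nCj].
  - split.
    + intros y [x [Cx ->]]. apply Hm, Hup, Cx.
    + intros u Hu. apply Hu. exists j; auto.
  - destruct j.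
    + split.
      * intros y [x [Cx ->]]. pose proof (Hup x Cx) as H.
        destruct x; simpl in H; unfold three_le in H; simpl in H; try lia.
        apply le_refl.
      * intros u _. apply Hbot.
    + exfalso.
      assert (H : le (p:=three_cpo) T1 T0).
      { apply Hl. intros x Cx. pose proof (Hup x Cx) as H.
        destruct x; simpl in *; unfold three_le in *; simpl in *; try lia.
        contradiction. }
      simpl in H; unfold three_le in H; simpl in H; lia.
    + exfalso.
      assert (H : le (p:=three_cpo) T2 T1).
      { apply Hl. intros x Cx. pose proof (Hup x Cx) as H.
        destruct x; simpl in *; unfold three_le in *; simpl in *; try lia.
        contradiction. }
      simpl in H; unfold three_le in H; simpl in H; lia.
Qed.

Theorem mainTheorem5 :
  is_generator three_cpo /\
  (forall (A B : cpo) (f : cpo_map A B), is_mono f -> ~ is_iso f ->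
     exists h : cpo_map three_cpo B,
       ~ (exists k : cpo_map three_cpo A, forall x, f (k x) = h x)).
Proof.
  split.
  - intros A B f g Hfg.
    destruct (cpo_bot A) as [bot Hbot].
    assert (Hx : exists x, f x <> g x).
    { apply NNPP; intro H; apply Hfg; apply functional_extensionality.
      intro x; apply NNPP; intro H'; apply H; exists x; exact H'. }
    destruct Hx as [x Hx].
    exists (CpoMap (h3_map _ x x Hbot (le_refl x))).
    intro E. apply Hx. exact (equal_f E T1).
  - intros A B f Hmono Hiso.
    apply NNPP; intro Hn.
    assert (Hfac : forall h : cpo_map three_cpo B, exists k : cpo_map three_cpo A,
               forall x, f (k x) = h x).
    { intro h; apply NNPP; intro H'; apply Hn; exists h; exact H'. }
    destruct (cpo_bot A) as [botA HbotA].
    destruct (cpo_bot B) as [botB HbotB].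
    assert (Hinj : forall x y, f x = f y -> x = y).
    { intros x y Exy.
      pose (g1 := CpoMap (h3_map _ x x HbotA (le_refl x))).
      pose (g2 := CpoMap (h3_map _ y y HbotA (le_refl y))).
      assert (E : (g1 : three_cpo -> A) = g2).
      { apply Hmono. apply functional_extensionality; intros []; simpl; auto. }
      exact (equal_f E T1). }
    assert (Hsurj : forall b, exists a, f a = b).
    { intro b.
      destruct (Hfac (CpoMap (h3_map _ b b HbotB (le_refl b)))) as [k Hk].
      exists (k T1). exact (Hk T1). }
    assert (Href : forall a a', le (f a) (f a') -> le a a').
    { intros a a' H.
      destruct (Hfac (CpoMap (h3_map _ _ _ HbotB H))) as [k Hk].
      pose proof (Hk T1) as E1; pose proof (Hk T2) as E2; simpl in E1, E2.
      apply Hinj in E1; apply Hinj in E2.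
      rewrite <- E1, <- E2. apply (cpo_mono (cmap_join k)).
      simpl; unfold three_le; simpl; lia. }
    assert (Hfm := cpo_mono (cmap_join f)).
    pose (g := fun b => proj1_sig (constructive_indefinite_description _ (Hsurj b))).
    assert (Hfg : forall b, f (g b) = b).
    { intro b; unfold g; destruct constructive_indefinite_description; simpl; auto. }
    assert (Hgmap : @is_cpo_map B A g).
    { intros C j _ [Hup Hl]. split.
      - intros y [x [Cx ->]]. apply Href. rewrite !Hfg. apply Hup, Cx.
      - intros u Hu. apply Href. rewrite Hfg. apply Hl.
        intros x Cx. rewrite <- (Hfg x). apply Hfm. apply Hu. exists x; auto. }
    apply Hiso. exists (CpoMap Hgmap). split; simpl.
    + intro x; apply Hinj; rewrite Hfg; reflexivity.
    + exact Hfg.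
Qed.
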